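(* Let $\mathbb{X},\mathbb{Y}$ be real Banach spaces, $A\subseteq\mathbb{X}$, and $T:\mathbb{X}\to\mathbb{Y}$ a bounded linear operator that preserves Birkhoff–James orthogonality at each point of $A$. Then $T$ preserves Birkhoff–James orthogonality at each point of $\overline{A}\cap\operatorname{Sm}\mathbb{X}$.
   Context: $u\perp_B v$ (Birkhoff–James orthogonality) means $\|u+\lambda v\|\ge\|u\|$ for all $\lambda\in\mathbb{R}$. $T$ preserves Birkhoff–James orthogonality at $x$ if $x\perp_B v$ implies $Tx\perp_B Tv$ for all $v\in\mathbb{X}$. For non-zero $z$, $J(z)=\{f\in\mathbb{X}^*:\|f\|=1,\ f(z)=\|z\|\}$; $z$ is smooth if $J(z)$ is a singleton, and $\operatorname{Sm}\mathbb{X}$ denotes the set of all smooth points of $\mathbb{X}$. $\overline{A}$ is the norm closure. *)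

(* Defs.v *)
From HB Require Import structures.
From mathcomp Require Import all_boot all_order all_algebra.
From mathcomp Require Import all_classical all_reals all_analysis.
Set Implicit Arguments. Unset Strict Implicit. Unset Printing Implicit Defensive.
Import Order.TTheory GRing.Theory Num.Theory.
Import numFieldNormedType.Exports.
Local Open Scope classical_set_scope.
Local Open Scope ring_scope.

Section Defs.
Context {R : realType}.

Definition bj_orth {X : normedModType R} (u v : X) : Prop :=
  forall lam : R, `|u| <= `|u + lam *: v|.

Definition preserves_bj_at {X Y : normedModType R} (T : X -> Y) (x : X) : Prop :=
  forall v : X, bj_orth x v -> bj_orth (T x) (T v).

Definition is_linear {X Y : normedModType R} (T : X -> Y) : Prop :=
  forall (a : R) (x y : X), T (a *: x + y) = a *: T x + T y.

Definition is_bounded {X Y : normedModType R} (T : X -> Y) : Prop :=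
  exists M : R, forall x : X, `|T x| <= M * `|x|.

Definition dual_norm {X : normedModType R} (f : X -> R) : R :=
  sup [set `|f x| | x in [set x : X | `|x| <= 1]].

Definition dual_elt {X : normedModType R} (f : X -> R) : Prop :=
  is_linear (f : X -> R^o) /\ is_bounded (f : X -> R^o).

Definition Jset {X : normedModType R} (z : X) : set (X -> R) :=
  [set f | dual_elt f /\ dual_norm f = 1 /\ f z = `|z|].

Definition smooth {X : normedModType R} (z : X) : Prop :=
  z != 0 /\ exists f : X -> R, Jset z = [set f].

Definition Sm (X : normedModType R) : set X := [set z | smooth z].

End Defs.

(* Main.v *)
Require Import Defs.
From HB Require Import structures.
From mathcomp Require Import all_boot all_order all_algebra.
From mathcomp Require Import all_classical all_reals all_analysis.
From mathcomp Require Import ring lra.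
Import Order.TTheory GRing.Theory Num.Theory.
Import numFieldNormedType.Exports.
Local Open Scope classical_set_scope.
Local Open Scope ring_scope.

Section HBsec.
Context {R : realType} {X : normedModType R}.

Definition pf (G : set (X * R)) :=
  [/\ G (0, 0),
      (forall (a : R) u w, G u -> G w -> G (a *: u.1 + w.1, a * u.2 + w.2)) &
      (forall u, G u -> u.2 <= `|u.1|)].

Lemma pf_scale G a u : pf G -> G u -> G (a *: u.1, a * u.2).
Proof.
move=> [G0 GC _] Gu; have := GC a u (0,0) Gu G0.
by rewrite /= addr0 addr0.
Qed.

Lemma pf_uniq G y r r' : pf G -> G (y, r) -> G (y, r') -> r = r'.
Proof.
move=> [G0 GC GD] h1 h2.
have := GD _ (GC (-1) _ _ h1 h2); rewrite /= scaleN1r addNr normr0 => A.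
have := GD _ (GC (-1) _ _ h2 h1); rewrite /= scaleN1r addNr normr0 => B.
lra.
Qed.

Lemma pf_ext G y0 : pf G -> ~ (exists r, G (y0, r)) ->
  exists G', pf G' /\ G `<=` G' /\ ~ (G' `<=` G).
Proof.
move=> pG nG; have [G0 GC GD] := pG.
have key u1 u2 : G u1 -> G u2 -> u1.2 - `|u1.1 - y0| <= `|u2.1 + y0| - u2.2.
  move=> h1 h2; have := GD _ (GC 1 _ _ h1 h2); rewrite /= scale1r mul1r => h.
  have : `|u1.1 + u2.1| <= `|u1.1 - y0| + `|u2.1 + y0|.
    have -> : u1.1 + u2.1 = (u1.1 - y0) + (u2.1 + y0) by rewrite addrACA addNr addr0.
    exact: ler_normD.
  lra.
pose S := [set u.2 - `|u.1 - y0| | u in G].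
have hS : has_sup S.
  split; first by exists (0 - `|0 - y0|); exists (0,0).
  exists (`|0 + y0| - 0) => _ [u Gu <-]; exact: (key u (0,0)).
pose c := sup S.
have c_lb u : G u -> u.2 - `|u.1 - y0| <= c.
  by move=> Gu; apply: sup_upper_bound => //; exists u.
have c_ub u : G u -> c <= `|u.1 + y0| - u.2.
  by move=> Gu; apply: ge_sup; [case: hS|move=> _ [w Gw <-]; exact: key].
pose G' := [set w | exists u t, G u /\ w = (u.1 + t *: y0, u.2 + t * c)].
have pos u t : G u -> 0 < t -> u.2 + t * c <= `|u.1 + t *: y0| /\
                                u.2 - t * c <= `|u.1 - t *: y0|.
  move=> Gu t0; have Gu' : G (t^-1 *: u.1, t^-1 * u.2) by apply: pf_scale.
  have h1 := c_ub _ Gu'; have h2 := c_lb _ Gu'; rewrite /= in h1 h2.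
  have E1 : `|u.1 + t *: y0| = `|t *: (t^-1 *: u.1 + y0)|.
    by rewrite scalerDr scalerA mulfV ?gt_eqF // scale1r.
  have E2 : `|u.1 - t *: y0| = `|t *: (t^-1 *: u.1 - y0)|.
    by rewrite scalerBr scalerA mulfV ?gt_eqF // scale1r.
  rewrite normrZ gtr0_norm // in E1; rewrite normrZ gtr0_norm // in E2.
  rewrite E1 E2; have tt : t * t^-1 = 1 by rewrite mulfV ?gt_eqF.
  have P1 := ler_wpM2l (ltW t0) h1; have P2 := ler_wpM2l (ltW t0) h2.
  rewrite mulrBr mulrA tt mul1r in P1; rewrite mulrBr mulrA tt mul1r in P2.
  split; lra.
exists G'; split; [split|split].
- by exists (0,0), 0; split => //; rewrite /= scale0r addr0 mul0r addr0.
- move=> a _ _ [u1 [t1 [G1 ->]]] [u2 [t2 [G2 ->]]].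
  exists (a *: u1.1 + u2.1, a * u1.2 + u2.2), (a * t1 + t2); split; first exact: GC.
  rewrite /=; congr (_, _).
    by rewrite scalerDr scalerA scalerDl addrACA.
  lra.
- move=> _ [u [t [Gu ->]]] /=.
  have [t0|t0|->] := ltgtP t 0.
    have := (pos u (- t) Gu); rewrite oppr_gt0 => /(_ t0) [_].
    by rewrite scaleNr opprK mulNr opprK.
  by have [] := pos u t Gu t0.
  by rewrite scale0r mul0r !addr0; exact: GD.
- by move=> u Gu; exists u, 0; split => //; rewrite scale0r mul0r !addr0; case: u Gu.
- move=> sub; apply: nG; exists c; apply: (sub (y0, c)).
  by exists (0,0), 1; split => //=; rewrite add0r scale1r mul1r add0r.
Qed.

Arguments pf_ext {G y0}.
Arguments pf_uniq {G y r r'}.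

Lemma hahn_banach (G0 : set (X * R)) : pf G0 ->
  exists F : X -> R, [/\ (forall (a : R) (y z : X), F (a *: y + z) = a * F y + F z),
    (forall y, F y <= `|y|) & (forall u, G0 u -> F u.1 = u.2)].
Proof.
move=> pG0.
pose T := {G : set (X * R) | pf G /\ G0 `<=` G}.
pose Rl (A B : T) := `[< sval A `<=` sval B >].
have [M Mmax] : exists t : T, forall s, Rl t s -> s = t.
  apply: (@Zorn T Rl).
  - by move=> A; apply/asboolP.
  - by move=> A B C /asboolP AB /asboolP BC; apply/asboolP => u /AB /BC.
  - move=> [A pA] [B pB] /asboolP AB /asboolP BA; apply: eq_exist.
    by apply/seteqP; split.
  - move=> A Atot.
    have [[B0 AB0]|nA] := pselect (exists B, A B); last first.
      by exists (exist _ G0 (conj pG0 (@subset_refl _ G0))) => s As; exfalso; apply: nA; exists s.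
    pose U := [set u | exists B, A B /\ sval B u].
    have pU : pf U /\ G0 `<=` U.
      split; last by move=> u G0u; exists B0; split => //; case: (svalP B0) => _; apply.
      split.
      + by exists B0; split => //; case: (svalP B0) => [[]].
      + move=> a u w [B1 [AB1 B1u]] [B2 [AB2 B2w]].
        have [/asboolP h|/asboolP h] := Atot _ _ AB1 AB2.
          exists B2; split => //; case: (svalP B2) => [[_ C _] _]; apply: C => //; exact: h.
        exists B1; split => //; case: (svalP B1) => [[_ C _] _]; apply: C => //; exact: h.
      + by move=> u [B [_ Bu]]; case: (svalP B) => [[_ _ D] _]; apply: D.
    exists (exist _ U pU) => s As; apply/asboolP => u su /=; exists s; split => //.
have [[G1 GC GD] G0G] := svalP M.
have pM : pf (sval M) by case: (svalP M).
have tot y : exists r, sval M (y, r).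
  apply: contrapT => ny.
  have [G' [pG' [MG' nG'M]]] := pf_ext pM ny.
  have G0G' : G0 `<=` G' by move=> u /G0G /MG'.
  have := Mmax (exist _ G' (conj pG' G0G')).
  by move=> /(_ (asboolT MG')) => eqM; apply: nG'M; rewrite -eqM.
have [F HF] := choice tot.
exists F; split.
- move=> a y z; apply: (pf_uniq pM (HF _)).
  by have := GC a _ _ (HF y) (HF z).
- by move=> y; exact: (GD (y, F y) (HF y)).
- move=> [y r] G0u /=; apply: (pf_uniq pM (HF y)); exact: G0G.
Qed.

End HBsec.
Section Supp.
Context {R : realType} {X : normedModType R}.

Lemma lin0 (F : X -> R) : (forall (a : R) y z, F (a *: y + z) = a * F y + F z) ->
  [/\ F 0 = 0, forall y z, F (y + z) = F y + F z, forall a y, F (a *: y) = a * F y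
     & forall y, F (- y) = - F y].
Proof.
move=> L; have F0 : F 0 = 0.
  have := L 1 0 0; rewrite scale1r addr0 mul1r => h.
  by apply: (addrI (F 0)); rewrite addr0 -h.
split => //.
- by move=> y z; have := L 1 y z; rewrite scale1r mul1r.
- by move=> a y; have := L a y 0; rewrite !addr0 F0 addr0.
- by move=> y; have := L (-1) y 0; rewrite !addr0 F0 addr0 scaleN1r mulN1r.
Qed.

Lemma supp (x v : X) (c : R) : (forall s, `|x| + c * s <= `|x + s *: v|) ->
  exists F : X -> R, [/\ (forall (a : R) y z, F (a *: y + z) = a * F y + F z),
     (forall y, F y <= `|y|), F x = `|x| & F v = c].
Proof.
move=> hyp.
pose G0 := [set w : X * R | exists a b : R, w = (a *: x + b *: v, a * `|x| + b * c)].
have cb s : c * s <= `|s *: v|.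
  have := hyp s; have := ler_normD x (s *: v); lra.
have pG0 : pf G0.
  split.
  - by exists 0, 0; rewrite !scale0r !mul0r addr0 addr0.
  - move=> k _ _ [a1 [b1 ->]] [a2 [b2 ->]] /=.
    exists (k * a1 + a2), (k * b1 + b2); congr (_, _); last by lra.
    rewrite scalerDr !scalerA addrACA -scalerDl -scalerDl //.
  - move=> _ [a [b ->]] /=.
    have [a0|a0] := ltP 0 a.
      have := hyp (b / a).
      have -> : a *: x + b *: v = a *: (x + (b / a) *: v).
        by rewrite scalerDr scalerA; congr (_ + _); congr (_ *: _); field; rewrite gt_eqF.
      rewrite normrZ gtr0_norm // => h.
      have := ler_wpM2l (ltW a0) h; rewrite mulrDr.
      have -> : a * (c * (b / a)) = b * c by field; rewrite gt_eqF.
      lra.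
    have t1 : `|b *: v| <= `|a *: x + b *: v| + `|a *: x|.
      by have := ler_normD (a *: x + b *: v) (- (a *: x)); rewrite addrAC subrr add0r normrN.
    have t2 : `|a *: x| = - a * `|x| by rewrite normrZ ler0_norm // mulNr.
    have := cb b; lra.
have [F [L D E]] := @hahn_banach _ _ G0 pG0.
exists F; split => //.
- have := E (x, `|x|); apply; exists 1, 0.
  by rewrite scale1r scale0r addr0 mul1r mul0r addr0.
- have := E (v, c); apply; exists 0, 1.
  by rewrite scale1r scale0r add0r mul1r mul0r add0r.
Qed.

Lemma inJ (x : X) (F : X -> R) : x != 0 ->
  (forall (a : R) y z, F (a *: y + z) = a * F y + F z) ->
  (forall y, F y <= `|y|) -> F x = `|x| -> Jset x F.
Proof.
move=> x0 L D Fx; have [F0 Fadd FZ FN] := lin0 F L.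
have nF y : `|F y| <= `|y|.
  rewrite ler_norml D andbT; have := D (- y); rewrite FN normrN; lra.
split; [split|split] => //.
- by exists 1 => y; rewrite mul1r; exact: nF.
- pose S := [set `|F y| | y in [set y : X | `|y| <= 1]].
  have nx : 0 < `|x| by rewrite normr_gt0.
  have hS : has_sup S.
    split; first by exists `|F 0|; exists 0 => //=; rewrite normr0.
    by exists 1 => _ [y /= y1 <-]; apply: le_trans (nF y) y1.
  apply/eqP; rewrite eq_le; apply/andP; split.
    by apply: ge_sup; [case: hS|move=> _ [y /= y1 <-]; apply: le_trans (nF y) y1].
  apply: sup_upper_bound => //; exists (`|x|^-1 *: x).
    by rewrite /= normrZ normrV ?unitfE ?gt_eqF // normr_id mulVf ?gt_eqF.
  by rewrite FZ Fx mulVf ?gt_eqF // normr1.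
Qed.

End Supp.
Section Key.
Context {R : realType} {X : normedModType R}.

Lemma smooth_key (x v : X) : smooth x -> bj_orth x v ->
  forall e : R, 0 < e -> exists2 t : R, 0 < t & `|x + t *: v| < `|x| + e * t.
Proof.
move=> [x0 [f Jf]] xv e e0.
apply: contrapT => nt.
have h1 : forall s, `|x| + e * s <= `|x + s *: v|.
  move=> s; have [s0|s0] := ltP 0 s.
    rewrite leNgt; apply/negP => lt; apply: nt; exists s => //.
  have := xv s; nra.
have h0 : forall s, `|x| + 0 * s <= `|x + s *: v|.
  by move=> s; rewrite mul0r addr0; exact: xv.
have [F1 [L1 D1 E1 V1]] := supp x v e h1.
have [F0 [L0 D0 E0 V0]] := supp x v 0 h0.
have J1 := inJ x F1 x0 L1 D1 E1; have J0 := inJ x F0 x0 L0 D0 E0.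
rewrite Jf in J1 J0.
have : F0 v = F1 v by rewrite J0 J1.
by rewrite V0 V1 => eq; move: e0; rewrite -eq ltxx.
Qed.

Lemma bj_opp (x v : X) : bj_orth x v -> bj_orth x (- v).
Proof. by move=> h lam; rewrite scalerN -scaleNr; exact: h. Qed.

End Key.
Lemma tri {R : realType} {Y : normedModType R} (a b : Y) : `|a| <= `|b| + `|a - b|.
Proof. by have := ler_normD (a - b) b; rewrite subrK addrC. Qed.

Theorem mainTheorem2 (R : realType) (X Y : completeNormedModType R)
  (A : set X) (T : X -> Y) :
  is_linear T -> is_bounded T ->
  (forall x, A x -> preserves_bj_at T x) ->
  forall x, (closure A `&` @Sm R X) x -> preserves_bj_at T x.
Proof.
move=> linT [M HM] pres x [clx sx] v xv lam.
have x0 : x != 0 by case: sx.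
have T0 : T 0 = 0.
  have := linT 1 0 0; rewrite scale1r addr0 scale1r => h.
  by apply: (addrI (T 0)); rewrite addr0 -h.
have TB y z : T (y - z) = T y - T z.
  by rewrite addrC -scaleN1r linT scaleN1r addrC.
have TZ a y : T (a *: y) = a *: T y.
  by have := linT a y 0; rewrite !addr0 T0 addr0.
have nx : 0 < `|x| by rewrite normr_gt0.
have M0 : 0 <= M.
  have Mx : 0 <= M * `|x| := le_trans (normr_ge0 _) (HM x).
  by rewrite pmulr_lge0 in Mx.
apply/ler_addgt0Pr => e e0.
pose K := 2 * M + 2 * `|lam| * M + 1.
have K0 : 0 < K by rewrite /K; have := normr_ge0 lam; nra.
pose eps := e / K.
have eps0 : 0 < eps by rewrite divr_gt0.
have eK : e = 2 * (M * eps) + 2 * (`|lam| * (eps * M)) + eps.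
  by rewrite /eps /K; field; rewrite gt_eqF.
have [t t0 ht] := smooth_key x v sx xv eps eps0.
have [t' t'0 ht'] := smooth_key x (- v) sx (bj_opp x v xv) eps eps0.
pose del := Num.min (Num.min (eps * t / 2) (eps * t' / 2)) (Num.min eps (`|x| / 2)).
have del0 : 0 < del.
  have a1 : 0 < eps * t / 2 by rewrite divr_gt0 // mulr_gt0.
  have a2 : 0 < eps * t' / 2 by rewrite divr_gt0 // mulr_gt0.
  have a3 : 0 < `|x| / 2 by rewrite divr_gt0.
  by rewrite /del !lt_min a1 a2 a3 eps0.
have [y [Ay bxy]] := clx _ (nbhsx_ballx x del del0).
move: bxy; rewrite -ball_normE /ball_ /del /= !lt_min => /andP[/andP[d1 d2] /andP[d3 d4]].
have xyy : `|x| <= `|x - y| + `|y|.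
  by have := tri x y; rewrite addrC.
have ny : 0 < `|y| by lra.
have y0 : y != 0 by rewrite -normr_gt0.
have [g [Lg Dg Eg _]] : exists g : X -> R,
    [/\ (forall (a : R) y z, g (a *: y + z) = a * g y + g z),
     (forall z, g z <= `|z|), g y = `|y| & g 0 = 0].
  by apply: supp => s; rewrite scaler0 addr0 mul0r addr0.
have [g0 gadd gZ gN] := lin0 g Lg.
pose d := g v.
pose k := d / `|y|.
pose w := v - k *: y.
have yw : bj_orth y w.
  move=> mu; have := Dg (y + mu *: w).
  have -> : g (y + mu *: w) = `|y|.
    rewrite gadd gZ /w gadd gN gZ Eg /k divfK ?gt_eqF //.
    by rewrite -/d subrr mulr0 addr0.
  by [].
have Tyw := pres y Ay w yw lam.
have hd1 : `|y| + t * d <= `|y + t *: v|.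
  by have := Dg (y + t *: v); rewrite gadd gZ Eg.
have hd2 : `|y| - t' * d <= `|y + t' *: - v|.
  by have := Dg (y + t' *: - v); rewrite gadd gZ gN Eg mulrN.
have tr1 : `|y + t *: v| <= `|x + t *: v| + `|x - y|.
  have := tri (y + t *: v) (x + t *: v).
  by rewrite opprD addrACA subrr addr0 -opprB normrN.
have tr2 : `|y + t' *: - v| <= `|x + t' *: - v| + `|x - y|.
  have := tri (y + t' *: - v) (x + t' *: - v).
  by rewrite opprD addrACA subrr addr0 -opprB normrN.
have dlt : `|d| <= 2 * eps.
  rewrite ler_norml; apply/andP; split; nra.
have Tw : T w = T v - k *: T y by rewrite /w TB TZ.
have N1 : `|T y + lam *: T w| <= `|T y + lam *: T v| + `|lam| * (`|k| * `|T y|).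
  rewrite Tw scalerBr addrA -normrZ -normrZ.
  exact: ler_normB.
have N2 : `|T y + lam *: T v| <= `|T x + lam *: T v| + M * `|x - y|.
  have := tri (T y + lam *: T v) (T x + lam *: T v).
  rewrite opprD addrACA subrr addr0 -TB => h.
  by apply: le_trans h _; rewrite lerD2l distrC.
have N3 : `|T x| <= `|T y| + M * `|x - y|.
  have := tri (T x) (T y); rewrite -TB => h.
  by apply: le_trans h _; rewrite lerD2l.
have N4 : `|k| * `|T y| <= `|d| * M.
  have := ler_wpM2l (normr_ge0 k) (HM y).
  have -> : `|k| * (M * `|y|) = `|d| * M.
    by rewrite /k normrM normrV ?unitfE ?gt_eqF // normr_id; field; rewrite gt_eqF.
  by [].
have N5 : M * `|x - y| <= M * eps := ler_wpM2l M0 (ltW d3).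
have N6 : `|lam| * (`|k| * `|T y|) <= `|lam| * (2 * (eps * M)).
  apply: ler_wpM2l => //; apply: le_trans N4 _.
  by rewrite mulrA ler_wpM2r.
lra.
Qed.
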